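(* Let $R$ be a unital commutative ring and $g\in\mathrm{SL}_d(R)$, and let \[ \mathbf{L}_g(R)=\{(w,\,g^{-1}\theta(w)g):w\in\mathbf{H}_{\tau(g)}(R)\}. \] Then $\mathbf{L}_g(R)$ is a subgroup of $\mathrm{SO}_Q(R)\times\mathrm{ASL}_{d-1}(R)$, and it is exactly the stabilizer of $g$ under the right action $g\cdot(\rho,\eta)=\theta(\rho)^{-1}g\eta$ of $\mathrm{SO}_Q(R)\times\mathrm{ASL}_{d-1}(R)$ on $\mathrm{SL}_d(R)$.
   Context: $Q(\mathbf{x})=\mathbf{x}^tM\mathbf{x}$ with $M\in M_d(\mathbb{Z})$ symmetric (integral quadratic form), $\mathrm{SO}_Q(R)=\{h\in\mathrm{SL}_d(R):h^tMh=M\}$, and for $\mathbf{v}\in R^d$, $\mathbf{H}_{\mathbf{v}}(R)=\{h\in\mathrm{SO}_Q(R):h\mathbf{v}=\mathbf{v}\}$. $\theta(g)=(g^t)^{-1}$, $\tau(g)=\theta(g)\mathbf{e}_d$. $\mathrm{ASL}_{d-1}(R)\le\mathrm{SL}_d(R)$ is the group of matrices $\begin{pmatrix}m&\mathbf{w}\\ \mathbf{0}&1\end{pmatrix}$, $m\in\mathrm{SL}_{d-1}(R)$, $\mathbf{w}\in R^{d-1}$. *)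

(* Defs.v *)
From HB Require Import structures.
From mathcomp Require Import all_boot all_order all_algebra.
Set Implicit Arguments. Unset Strict Implicit. Unset Printing Implicit Defensive.
Import Order.TTheory GRing.Theory Num.Theory.
Local Open Scope ring_scope.

(* Dimension d is written n.+1 (d >= 1 so that e_d exists). *)
Section Defs.
Variables (R : comUnitRingType) (n : nat).
Local Notation d := n.+1.

Definition MR (M : 'M[int]_d) : 'M[R]_d := map_mx (fun z : int => z%:~R) M.

Definition SL (g : 'M[R]_d) : Prop := \det g = 1.

Definition SOQ (M : 'M[int]_d) (h : 'M[R]_d) : Prop :=
  SL h /\ h^T *m MR M *m h = MR M.

Definition Hv (M : 'M[int]_d) (v : 'cV[R]_d) (h : 'M[R]_d) : Prop :=
  SOQ M h /\ h *m v = v.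

(* ASL_{d-1}(R): matrices (m w; 0 1) with m in SL_{d-1}(R); equivalently
   determinant 1 and last row equal to e_d^t. *)
Definition ASL (g : 'M[R]_d) : Prop :=
  SL g /\ row ord_max g = row ord_max 1%:M.

Definition theta (g : 'M[R]_d) : 'M[R]_d := invmx (g^T).

Definition e_d : 'cV[R]_d := delta_mx ord_max 0.

Definition tau (g : 'M[R]_d) : 'cV[R]_d := theta g *m e_d.

Definition Lg (M : 'M[int]_d) (g : 'M[R]_d) (p : 'M[R]_d * 'M[R]_d) : Prop :=
  exists2 w, Hv M (tau g) w & p = (w, invmx g *m theta w *m g).

Definition act (g : 'M[R]_d) (p : 'M[R]_d * 'M[R]_d) : 'M[R]_d :=
  invmx (theta p.1) *m g *m p.2.

Definition SOxASL (M : 'M[int]_d) (p : 'M[R]_d * 'M[R]_d) : Prop :=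
  SOQ M p.1 /\ ASL p.2.

Definition is_subgroup (G S : 'M[R]_d * 'M[R]_d -> Prop) : Prop :=
  [/\ (forall p, S p -> G p),
      S (1%:M, 1%:M),
      (forall p q, S p -> S q -> S (p.1 *m q.1, p.2 *m q.2)) &
      (forall p, S p -> S (invmx p.1, invmx p.2))].

End Defs.

(* Main.v *)
Require Import Defs.
From HB Require Import structures.
From mathcomp Require Import all_boot all_order all_algebra.
Import Order.TTheory GRing.Theory Num.Theory.
Local Open Scope ring_scope.

Set Implicit Arguments.
Section H.
Variables (R : comUnitRingType) (n : nat).
Local Notation d := n.+1.
Implicit Types (g w h : 'M[R]_d).

Lemma invmxM' (A B : 'M[R]_d) : A \in unitmx -> B \in unitmx ->
  invmx (A *m B) = invmx B *m invmx A.
Proof.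
move=> uA uB; have uAB : A *m B \in unitmx by rewrite unitmx_mul uA.
have H : (A *m B) *m (invmx B *m invmx A) = 1%:M.
  by rewrite -mulmxA (mulmxA B) mulmxV // mul1mx mulmxV.
by rewrite -[LHS]mulmx1 -H mulmxA mulVmx // mul1mx.
Qed.

Lemma SL_unit g : SL g -> g \in unitmx.
Proof. by rewrite /SL unitmxE => ->; rewrite unitr1. Qed.

Lemma theta_det w : SL w -> \det (theta w) = 1.
Proof. by rewrite /SL /theta det_inv det_tr => ->; rewrite invr1. Qed.

Lemma invtheta w : w \in unitmx -> invmx (theta w) = w^T.
Proof. by move=> u; rewrite /theta invmxK. Qed.

Lemma thetaM w h : w \in unitmx -> h \in unitmx -> theta (w *m h) = theta w *m theta h.
Proof. by move=> u v; rewrite /theta trmx_mul invmxM' ?unitmx_tr. Qed.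

Lemma thetaV w : w \in unitmx -> theta (invmx w) = invmx (theta w).
Proof. by move=> u; rewrite /theta trmx_inv. Qed.

Lemma SL1 : SL (1%:M : 'M[R]_d).
Proof. by rewrite /SL det1. Qed.

Lemma SLM g h : SL g -> SL h -> SL (g *m h).
Proof. by rewrite /SL det_mulmx => -> ->; rewrite mulr1. Qed.

Lemma SLV g : SL g -> SL (invmx g).
Proof. by rewrite /SL det_inv => ->; rewrite invr1. Qed.

Lemma lastrow_iff g w : g \in unitmx -> w \in unitmx ->
  (row ord_max (invmx g *m theta w *m g) = row ord_max 1%:M) <-> (w *m tau g = tau g).
Proof.
move=> ug uw; rewrite !rowE.
set u := delta_mx 0 ord_max.
have ue : u^T = @e_d R n by rewrite trmx_delta.
have E : (u *m (invmx g *m theta w *m g) = u *m 1%:M) <->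
         (u *m invmx g *m theta w = u *m invmx g).
  rewrite mulmx1 !mulmxA; split => H.
    by rewrite -[LHS](mulmxK ug) H.
  by rewrite H mulmxKV.
apply: (iff_trans E); split => H.
- have := congr1 trmx H; rewrite !trmx_mul ue /theta trmx_inv trmx_inv trmxK => H2.
  by rewrite /tau /theta -{1}H2 mulKVmx.
- apply: trmx_inj; rewrite !trmx_mul ue /theta trmx_inv trmx_inv trmxK.
  move: H; rewrite /tau /theta => H.
  by rewrite -{1}H mulKmx.
Qed.

End H.
Unset Implicit Arguments.

Theorem lemma3p2 (R : comUnitRingType) (n : nat) (M : 'M[int]_n.+1)
    (g : 'M[R]_n.+1) :
  M^T = M -> SL g ->
  is_subgroup (SOxASL (R := R) M) (Lg M g) /\
  (forall p : 'M[R]_n.+1 * 'M[R]_n.+1,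
     SOxASL M p -> (act g p = g <-> Lg M g p)).
Proof.
move=> _ sg; have ug := SL_unit sg.
have inL : forall w, Hv M (tau g) w -> SOxASL M (w, invmx g *m theta w *m g).
  move=> w [[sw Qw] fw]; have uw := SL_unit sw.
  split => //; split.
    by apply: SLM; [apply: SLM; [apply: SLV|rewrite /SL theta_det]|].
  by apply/lastrow_iff.
split; first split.
- by move=> p [w Hw ->]; apply: inL.
- exists 1%:M.
    split; first by split; [apply: SL1| rewrite trmx1 mul1mx mulmx1].
    by rewrite mul1mx.
  by rewrite /theta trmx1 invmx1 mulmx1 mulVmx.
- move=> p q [w [[sw Qw] fw] ->] [h [[sh Qh] fh] ->] /=.
  have uw := SL_unit sw; have uh := SL_unit sh.
  exists (w *m h).
    split; last by rewrite -mulmxA fh fw.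
    split; first exact: SLM.
    by rewrite trmx_mul !mulmxA -(mulmxA h^T) -(mulmxA h^T) Qw Qh.
  congr pair; rewrite thetaM // !mulmxA; congr (_ *m _).
  by rewrite -!mulmxA mulKVmx // unitmx_mul ug /= unitmx_inv.
- move=> p [w [[sw Qw] fw] ->] /=.
  have uw := SL_unit sw.
  exists (invmx w).
    split; last by rewrite -{1}fw mulKmx.
    split; first exact: SLV.
    rewrite trmx_inv.
    by rewrite -{1}Qw !mulmxA mulVmx ?unitmx_tr // mul1mx mulmxK.
  congr pair; rewrite thetaV //.
  have uth : theta w \in unitmx by rewrite /theta unitmx_inv unitmx_tr.
  have ug' : invmx g \in unitmx by rewrite unitmx_inv.
  have u2 : invmx g *m theta w \in unitmx by rewrite unitmx_mul ug'.
  by rewrite (invmxM' _ _ _ u2 ug) (invmxM' _ _ _ ug' uth) invmxK mulmxA.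
- move=> [w e] [[sw Qw] [se le]] /=; have uw := SL_unit sw.
  rewrite /act /= invtheta //; split.
  + move=> H.
    have He : e = invmx g *m theta w *m g.
      rewrite -mulmxA; apply: (canRL (mulKmx ug)).
      by rewrite /theta -{2}H !mulmxA mulVmx ?unitmx_tr // mul1mx.
    exists w => //; last by rewrite He.
    split; first by split.
    by apply/(lastrow_iff _ _ _ ug uw); rewrite -He.
  + move=> [h Hh [-> ->]].
    by rewrite /theta !mulmxA mulmxK // mulmxV ?unitmx_tr ?SL_unit // ?mul1mx; case: Hh => [[]].
Qed.
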